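(* Let $\mathfrak{U}$ be a symmetrically pseudo-amenable Banach algebra and let $z\neq0$ be an element of the center $\mathcal{Z}(\mathfrak{U})=\{z\in\mathfrak{U}: az=za \text{ for all } a\in\mathfrak{U}\}$. Then there is a net $\{f_\lambda\}_{\lambda\in\Lambda}$ in the dual space $\mathfrak{U}^*$ such that $f_\lambda(ab-ba)\to0$ for all $a,b\in\mathfrak{U}$ and $f_\lambda(z)\to1$. In particular, if $\mathfrak{U}$ is unital with unit $1$, there is a net $\{f_\lambda\}$ in $\mathfrak{U}^*$ with $f_\lambda(ab-ba)\to0$ for all $a,b\in\mathfrak{U}$ and $f_\lambda(1)\to1$.
   Context: For a Banach algebra $\mathfrak{U}$, $\mathfrak{U}\widehat{\otimes}\mathfrak{U}$ is the projective tensor product, with $a(b\otimes c)=ab\otimes c$, $(b\otimes c)a=b\otimes ca$, and $\pi(b\otimes c)=bc$ (extended linearly and continuously). The flip is $(b\otimes c)^{\circ}=c\otimes b$; $\mathbf{t}$ is symmetric if $\mathbf{t}^\circ=\mathbf{t}$. An approximate diagonal is a net $\{\mathbf{t}_\lambda\}$ in $\mathfrak{U}\widehat{\otimes}\mathfrak{U}$ (not necessarily bounded) with $a\mathbf{t}_\lambda-\mathbf{t}_\lambda a\to0$ and $\pi(\mathbf{t}_\lambda)a\to a$ for all $a\in\mathfrak{U}$. $\mathfrak{U}$ is symmetrically pseudo-amenable if it has an approximate diagonal consisting of symmetric elements. *)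

(* Defs.v *)
From mathcomp Require Import all_boot all_algebra.
From mathcomp Require Export complex.
From mathcomp Require Export all_classical all_reals all_analysis.
Export GRing.Theory Num.Theory.
Set Implicit Arguments.
Unset Strict Implicit.
Unset Printing Implicit Defensive.
Local Open Scope ring_scope.

Section BanachAlgebra.
Variable R : realType.
Notation C := R[i].
Variable U : completeNormedModType C.

Definition is_banach_algebra (mul : U -> U -> U) : Prop :=
  [/\ (forall a b c, mul a (mul b c) = mul (mul a b) c),
      (forall a b c, mul a (b + c) = mul a b + mul a c) /\
      (forall a b c, mul (a + b) c = mul a c + mul b c),
      (forall (k : C) a b, mul (k *: a) b = k *: mul a b),
      (forall (k : C) a b, mul a (k *: b) = k *: mul a b)
    & (forall a b, `|mul a b| <= `|a| * `|b|)].

Definition central (mul : U -> U -> U) (z : U) : Prop :=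
  forall a, mul a z = mul z a.

Definition is_dual_elt (f : U -> C) : Prop :=
  [/\ (forall x y, f (x + y) = f x + f y),
      (forall (k : C) x, f (k *: x) = k * f x)
    & exists M : C, forall x, `|f x| <= M * `|x|].

Definition directed (L : Type) (le : L -> L -> Prop) : Prop :=
  [/\ (exists l : L, True),
      (forall l, le l l),
      (forall l1 l2 l3, le l1 l2 -> le l2 l3 -> le l1 l3)
    & (forall l1 l2, exists l3, le l1 l3 /\ le l2 l3)].

Definition eventually_net (L : Type) (le : L -> L -> Prop) (P : L -> Prop) :=
  exists l0, forall l, le l0 l -> P l.

Definition net_cvg (L : Type) (le : L -> L -> Prop) (x : L -> C) (c : C) :=
  forall e : C, 0 < e -> eventually_net le (fun l => `|x l - c| < e).

(* Algebraic tensors are finite lists of elementary tensors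
   [:: (a1,b1); ...; (an,bn)] standing for sum_i a_i (x) b_i.
   Two such lists denote the same algebraic tensor iff every bilinear
   form takes the same value on them (universal property of U (x) U). *)
Definition bilinear_form (phi : U -> U -> C) : Prop :=
  [/\ (forall x y z, phi (x + y) z = phi x z + phi y z),
      (forall x y z, phi x (y + z) = phi x y + phi x z),
      (forall (k : C) x y, phi (k *: x) y = k * phi x y)
    & (forall (k : C) x y, phi x (k *: y) = k * phi x y)].

Definition ftensor := seq (U * U).

Definition ftensor_eq (s t : ftensor) : Prop :=
  forall phi, bilinear_form phi ->
    \sum_(p <- s) phi p.1 p.2 = \sum_(p <- t) phi p.1 p.2.

(* projective norm of an algebraic tensor is < e :
   inf { sum_i |x_i| |y_i| : sum_i x_i (x) y_i = s } < e *)
Definition pnorm_lt (s : ftensor) (e : C) : Prop :=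
  exists t : ftensor, ftensor_eq s t /\ \sum_(p <- t) `|p.1| * `|p.2| < e.

Definition ftsub (s t : ftensor) : ftensor := s ++ [seq (- p.1, p.2) | p <- t].
Definition ftflip (s : ftensor) : ftensor := [seq (p.2, p.1) | p <- s].
Definition ftlmul (mul : U -> U -> U) (a : U) (s : ftensor) : ftensor :=
  [seq (mul a p.1, p.2) | p <- s].
Definition ftrmul (mul : U -> U -> U) (s : ftensor) (a : U) : ftensor :=
  [seq (p.1, mul p.2 a) | p <- s].
Definition ftpi (mul : U -> U -> U) (s : ftensor) : U :=
  \sum_(p <- s) mul p.1 p.2.

(* Elements of the completion U (x)^ U : Cauchy sequences of algebraic
   tensors for the projective norm; operations act termwise. *)
Definition ptensor := nat -> ftensor.

Definition pcauchy (u : ptensor) : Prop :=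
  forall e : C, 0 < e -> exists N0 : nat, forall m n : nat,
    (N0 <= m)%N -> (N0 <= n)%N -> pnorm_lt (ftsub (u m) (u n)) e.

(* ||u - v||_pi = lim_N ||u_N - v_N||_pi is (at most) e *)
Definition pdist_lt (u v : ptensor) (e : C) : Prop :=
  exists N0 : nat, forall N : nat, (N0 <= N)%N -> pnorm_lt (ftsub (u N) (v N)) e.

Definition psymmetric (u : ptensor) : Prop :=
  forall e : C, 0 < e -> pdist_lt (fun N => ftflip (u N)) u e.

Definition approximate_diagonal (mul : U -> U -> U)
    (L : Type) (le : L -> L -> Prop) (t : L -> ptensor) : Prop :=
  [/\ directed le,
      (forall l, pcauchy (t l)),
      (forall a (e : C), 0 < e -> eventually_net le (fun l =>
          pdist_lt (fun N => ftlmul mul a (t l N)) (fun N => ftrmul mul (t l N) a) e))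
    & (forall a (e : C), 0 < e -> eventually_net le (fun l =>
          exists N0 : nat, forall N : nat, (N0 <= N)%N ->
            `|mul (ftpi mul (t l N)) a - a| < e))].

Definition symmetrically_pseudo_amenable (mul : U -> U -> U) : Prop :=
  exists (L : Type) (le : L -> L -> Prop) (t : L -> ptensor),
    approximate_diagonal mul le t /\ (forall l, psymmetric (t l)).

Definition commutator_net_at (mul : U -> U -> U) (z : U) : Prop :=
  exists (L : Type) (le : L -> L -> Prop) (f : L -> U -> C),
    [/\ directed le,
        (forall l, is_dual_elt (f l)),
        (forall a b, net_cvg le (fun l => f l (mul a b - mul b a)) 0)
      & net_cvg le (fun l => f l z) 1].

End BanachAlgebra.

(* Main.v *)
Require Import Defs.
From mathcomp Require Import all_boot all_algebra complex.
From mathcomp Require Import ring.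
From mathcomp Require Import all_classical all_reals all_analysis.
Import order.Order.TTheory GRing.Theory Num.Theory.
Local Open Scope ring_scope.
Local Open Scope classical_set_scope.

Section HB.
Variables (R : realType) (V : zmodType) (sc : R -> V -> V) (p : V -> R).
Hypotheses (scD : forall r x y, sc r (x+y) = sc r x + sc r y)
 (scDl : forall r s x, sc (r+s) x = sc r x + sc s x)
 (scA : forall r s x, sc r (sc s x) = sc (r*s) x)
 (sc1 : forall x, sc 1 x = x)
 (pD : forall x y, p (x+y) <= p x + p y)
 (pZ : forall r x, p (sc r x) = `|r| * p x).

Lemma sc0 x : sc 0 x = 0.
Proof. by apply: (addrI (sc 0 x)); rewrite -scDl !addr0. Qed.
Lemma scN r x : sc (- r) x = - sc r x.
Proof. by apply/eqP; rewrite -subr_eq0 opprK -scDl addNr sc0. Qed.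
Lemma scx0 r : sc r 0 = 0.
Proof. by rewrite -(sc0 0) scA mulr0. Qed.
Lemma scxN r x : sc r (- x) = - sc r x.
Proof. have -> : - x = sc (-1) x by rewrite scN sc1.
by rewrite scA mulrN1 scN. Qed.
Lemma p0 : p 0 = 0.
Proof. by rewrite -(sc0 0) pZ normr0 mul0r. Qed.
Lemma pN x : p (- x) = p x.
Proof. by rewrite -{1}[x]sc1 -scN pZ normrN normr1 mul1r. Qed.

Definition good (z : V) (A : set (V * R)) :=
  [/\ forall r, A (sc r z, r * p z),
      forall x a b, A (x,a) -> A (x,b) -> a = b,
      forall x y a b, A (x,a) -> A (y,b) -> A (x+y, a+b),
      forall r x a, A (x,a) -> A (sc r x, r*a)
    & forall x a, A (x,a) -> a <= p x].

Lemma good00 z A : good z A -> A (0,0).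
Proof. by case=> /(_ 0); rewrite sc0 mul0r. Qed.

Lemma extend z A y : good z A -> (forall a, ~ A (y,a)) ->
  exists B, good z B /\ A `<` B.
Proof.
move=> hG ny; case: (hG) => G0 Gf Ga Gs Gp.
have A00 := good00 _ _ hG.
pose S := [set t | exists x a, A (x,a) /\ t = a - p (x - y)].
have S0 : S !=set0 by exists (0 - p (0 - y)); exists 0, 0; split=> //; exact: A00.
have Sub x' a' : A (x',a') -> ubound S (p (x' + y) - a').
  move=> Ax' _ [x [a [Ax ->]]].
  rewrite lerBrDr addrAC lerBlDr.
  have := Gp _ _ (Ga _ _ _ _ Ax Ax').
  move/le_trans; apply.
  have -> : x + x' = (x - y) + (x' + y) by rewrite addrCA subrK addrC.
  rewrite [X in _ <= X]addrC; exact: pD.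
have hS : has_sup S.
  split=> //; exists (p (0 + y) - 0); apply: Sub; exact: A00.
pose c := sup S.
have c1 x a : A (x,a) -> a + c <= p (x + y).
  move=> Ax; rewrite -lerBrDl; apply: ge_sup => //; exact: Sub.
have c2 x a : A (x,a) -> a - c <= p (x - y).
  move=> Ax; rewrite lerBlDr -lerBlDl; apply: sup_upper_bound => //.
  by exists x, a.
pose B := [set t | exists x a r, A (x,a) /\ t = (x + sc r y, a + r * c)].
have inB x a r : A (x,a) -> B (x + sc r y, a + r * c).
  by move=> Ax; exists x, a, r.
have Anoty x a r : A (x,a) -> r != 0 -> ~ A (sc r y, r * c) -> True.
  by [].
have Bf x a b : B (x,a) -> B (x,b) -> a = b.
  move=> [x1 [a1 [r1 [A1 [-> ->]]]]] [x2 [a2 [r2 [A2 []]]]].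
  have [->|rne] := eqVneq r1 r2.
    by move=> /addIr e ->; move: A2; rewrite -e => A2; rewrite (Gf _ _ _ A1 A2).
  move=> e; exfalso.
  have ey : sc (r1 - r2) y = x2 - x1.
    rewrite scDl scN; apply: (addIr (x1 + sc r2 y)).
    by rewrite addrCA subrK addrA subrK -e.
  have rne' : r1 - r2 != 0 by rewrite subr_eq0.
  apply: (ny ((r1 - r2)^-1 * (a2 - a1))).
  have -> : y = sc (r1 - r2)^-1 (x2 - x1) by rewrite -ey scA mulVf // sc1.

  apply: (Gs); apply: (Ga) => //.
  by have := Gs (-1) _ _ A1; rewrite scN sc1 mulN1r.
have Bp x a : B (x,a) -> a <= p x.
  move=> [x1 [a1 [r [A1 [-> ->]]]]].
  have [rlt|rgt|->] := ltgtP r 0; last by rewrite sc0 addr0 mul0r addr0; exact: Gp.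
  - have nr : 0 < - r by rewrite oppr_gt0.
    have := c2 _ _ (Gs (- r)^-1 _ _ A1).
    move/(ler_wpM2l (ltW nr)).
    rewrite -[X in _ <= X * p _]gtr0_norm // -pZ scD scA mulfV ?gt_eqF // sc1 scxN scN opprK.
    by rewrite mulrBr mulrA mulfV ?gt_eqF // mul1r mulNr opprK.
  - have := c1 _ _ (Gs r^-1 _ _ A1).
    move/(ler_wpM2l (ltW rgt)).
    rewrite -[X in _ <= X * p _]gtr0_norm // -pZ scD scA mulfV ?gt_eqF // sc1.
    by rewrite mulrDr mulrA mulfV ?gt_eqF // mul1r.
have Ba x1 x2 a1 a2 : B (x1,a1) -> B (x2,a2) -> B (x1 + x2, a1 + a2).
  move=> [u1 [b1 [r1 [A1 [-> ->]]]]] [u2 [b2 [r2 [A2 [-> ->]]]]].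
  have -> : u1 + sc r1 y + (u2 + sc r2 y) = (u1 + u2) + sc (r1 + r2) y.
    by rewrite scDl addrACA.
  have -> : b1 + r1 * c + (b2 + r2 * c) = (b1 + b2) + (r1 + r2) * c.
    by rewrite mulrDl addrACA.
  by apply: inB; apply: (Ga).
have Bs s x1 a1 : B (x1,a1) -> B (sc s x1, s * a1).
  move=> [u1 [b1 [r1 [A1 [-> ->]]]]].
  rewrite scD scA mulrDr mulrA; apply: inB; exact: (Gs).
exists B; split; first split => //.
- move=> r; have := inB _ _ 0 (G0 r); by rewrite sc0 mul0r !addr0.
- split.
    by move=> [x a] Ax; have := inB _ _ 0 Ax; rewrite sc0 mul0r !addr0.
  move=> BA; have := inB _ _ 1 A00; rewrite sc1 mul1r !add0r => /BA.
  exact: ny.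
Qed.

Lemma hahn_banach z : exists h : V -> R,
  [/\ (forall x y, h (x+y) = h x + h y), (forall r x, h (sc r x) = r * h x),
      (forall x, h x <= p x) & h z = p z].
Proof.
have pge0 x : 0 <= p x.
  have := pD x (- x); rewrite subrr p0 pN -mulr2n -mulr_natr.
  by rewrite pmulr_lge0.
pose G0 := [set q | exists r, q = (sc r z, r * p z)].
have gG0 : good z G0.
  split.
  - by move=> r; exists r.
  - move=> x a b [r] [ex ea] [r'] [ex' eb]; subst a b.
    have e : sc r z = sc r' z by rewrite -ex -ex'.
    have : p (sc (r - r') z) = 0 by rewrite scDl scN e subrr p0.
    rewrite pZ => /eqP; rewrite mulf_eq0 normr_eq0 subr_eq0 => /orP[/eqP->//|/eqP->].
    by rewrite !mulr0.
  - move=> x y a b [r [-> ->]] [r' [-> ->]]; exists (r + r').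
    by rewrite scDl mulrDl.
  - move=> s x a [r [-> ->]]; exists (s * r); by rewrite scA mulrA.
  - move=> x a [r [-> ->]]; rewrite pZ ler_wpM2r //; exact: ler_norm.
pose P := [set A | A = set0 \/ good z A].
have [|A [PA Amax]] := @Zorn_bigcup _ P.
  move=> F FP Ftot.
  have mem X q : F X -> X q -> good z X.
    by move=> FX Xq; case: (FP X FX) => // X0; move: Xq; rewrite X0.
  case: (pselect (exists q, (\bigcup_(X in F) X) q)) => [[q [X FX Xq]]|nq].
    right; have gX := mem _ _ FX Xq.
    have two X1 X2 q1 q2 : F X1 -> F X2 -> X1 q1 -> X2 q2 ->
        exists Y, [/\ F Y, good z Y, Y q1 & Y q2].
      move=> F1 F2 X1q X2q; have [S12|S21] := Ftot _ _ F1 F2.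
        by exists X2; split=> //; [exact: mem F2 X2q | exact: S12].
      by exists X1; split=> //; [exact: mem F1 X1q | exact: S21].
    split.
    - by move=> r; exists X => //; case: gX.
    - move=> x a b [X1 F1 X1q] [X2 F2 X2q].
      have [Y [_ [_ gf _ _ _] Y1 Y2]] := two _ _ _ _ F1 F2 X1q X2q; exact: gf Y1 Y2.
    - move=> x y a b [X1 F1 X1q] [X2 F2 X2q].
      have [Y [FY [_ _ ga _ _] Y1 Y2]] := two _ _ _ _ F1 F2 X1q X2q.
      by exists Y => //; exact: ga.
    - move=> r x a [X1 F1 X1q]; exists X1 => //.
      by case: (mem _ _ F1 X1q) => _ _ _ gs _; exact: gs.
    - move=> x a [X1 F1 X1q].
      by case: (mem _ _ F1 X1q) => _ _ _ _ gp; exact: gp.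
  left; apply/seteqP; split => // q Hq; exfalso; exact: nq (ex_intro _ q Hq).
have gA : good z A.
  case: PA => // A0; exfalso; apply: (Amax G0); last by right.
  split; first by rewrite A0.
  move=> G0A; have := G0A (sc 0 z, 0 * p z) (ex_intro _ 0 erefl).
  by rewrite A0.
have tot y : exists a, A (y, a).
  apply/not_existsP => ny.
  have [B [gB AB]] := extend z A y gA (fun a => ny a).
  by apply: (Amax B AB); right.
have [h hA] := choice tot.
case: gA => gG gf ga gs gp.
exists h; split.
- by move=> x y; apply: (gf _ _ _ (hA (x + y))); apply: ga.
- by move=> r x; apply: (gf _ _ _ (hA (sc r x))); apply: gs.
- by move=> x; apply: gp.
- by apply: (gf _ _ _ (hA z)); have := gG 1; rewrite sc1 mul1r.
Qed.
End HB.

Local Open Scope complex_scope.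
Section CHB.
Variables (R : realType) (U : normedModType R[i]).

Lemma rcD (a b : R) : (a + b)%:C = a%:C + b%:C.
Proof. by apply/eqP; rewrite eq_complex /= ?addr0 ?eqxx. Qed.
Lemma rcM (a b : R) : (a * b)%:C = a%:C * b%:C.
Proof. by apply/eqP; rewrite eq_complex /= ?mulr0 ?mul0r ?subr0 ?addr0 ?eqxx. Qed.
Lemma rcN (a : R) : (- a)%:C = - a%:C.
Proof. by apply/eqP; rewrite eq_complex /= ?oppr0 ?eqxx. Qed.
Lemma rc1 : (1 : R)%:C = 1.
Proof. by []. Qed.
Lemma rcle (a b : R) : (a%:C <= b%:C) = (a <= b).
Proof. by rewrite lecE /= eqxx. Qed.
Lemma ReD (x y : R[i]) : complex.Re (x + y) = complex.Re x + complex.Re y.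
Proof. by case: x; case: y. Qed.
Lemma ReMr (a : R) (w : R[i]) : complex.Re (a%:C * w) = a * complex.Re w.
Proof. by case: w => u v /=; rewrite mul0r subr0. Qed.
Lemma normrc (a : R) : `|a%:C| = `|a|%:C.
Proof. by rewrite normc_def /= expr0n addr0 sqrtr_sqr. Qed.
Lemma nC (x : R[i]) : 0 <= x -> x = (complex.Re x)%:C.
Proof.
move=> x0; rewrite [LHS]complexE; move: x0; rewrite lecE /= => /andP[/eqP -> _].
by rewrite mulr0 addr0.
Qed.
Lemma normi : `|'i : R[i]| = 1.
Proof. by rewrite normc_def /= expr0n add0r expr1n sqrtr1. Qed.

Lemma complex_hb (z : U) : z != 0 ->
  exists g : U -> R[i], [/\ (forall x y, g (x+y) = g x + g y),
    (forall k x, g (k *: x) = k * g x),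
    (exists G, 0 <= G /\ forall x, `|g x| <= G * `|x|) & g z = 1].
Proof.
move=> z0.
pose sc (r : R) (x : U) := r%:C *: x.
pose p (x : U) := complex.Re `|x|.
have pD x y : p (x + y) <= p x + p y.
  by rewrite /p -ReD -rcle -!nC ?addr_ge0 // ler_normD.
have pZ r x : p (sc r x) = `|r| * p x.
  by rewrite /p /sc normrZ normrc ReMr.
have scD r x y : sc r (x + y) = sc r x + sc r y by exact: scalerDr.
have scDl r s x : sc (r + s) x = sc r x + sc s x by rewrite /sc rcD scalerDl.
have scA r s x : sc r (sc s x) = sc (r * s) x by rewrite /sc scalerA rcM.
have sc1 x : sc 1 x = x by rewrite /sc rc1 scale1r.
have [h [hD hZ hp hz]] := @hahn_banach R U sc p scD scDl scA sc1 pD pZ z.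
have h0 : h 0 = 0 by apply: (addrI (h 0)); rewrite -hD !addr0.
have hN x : h (- x) = - h x by apply: (addrI (h x)); rewrite -hD !subrr h0.
have pi x : p ('i *: x) = p x by rewrite /p normrZ normi mul1r.
have habs x : `|h x| <= p x.
  rewrite ler_norml hp andbT lerNl -hN; apply: le_trans (hp _) _.
  by rewrite /p normrN.
pose g x := (h x)%:C - 'i * (h ('i *: x))%:C.
have gD x y : g (x + y) = g x + g y.
  by rewrite /g scalerDr !hD !rcD mulrDr opprD addrACA.
have hZ' r x : h (r%:C *: x) = r * h x := hZ r x.
have gR r x : g (r%:C *: x) = r%:C * g x.
  rewrite /g; have -> : 'i *: (r%:C *: x) = r%:C *: ('i *: x) by rewrite !scalerA mulrC.
  rewrite (hZ' r x) (hZ' r ('i *: x)) !rcM; ring.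
have gi x : g ('i *: x) = 'i * g x.
  rewrite /g scalerA mulCii scaleN1r hN rcN.
  by rewrite mulrN opprK mulrBr mulrA mulCii mulN1r opprK addrC.
have gz : g z != 0.
  have : complex.Re (g z) = p z.
    by rewrite /g hz /= mul0r mulr0 subrr subr0.
  have pz : 0 < p z.
    by move: (normr_gt0 z); rewrite z0 ltcE => /andP[_].
  by move=> e; apply/eqP => gz0; move: e pz; rewrite gz0 /= => <-; rewrite ltxx.
have gb x : `|g x| <= 2 * `|x|.
  rewrite /g (nC _ (normr_ge0 x)) -/(p x); apply: le_trans (ler_normB _ _) _.
  rewrite normrM normi mul1r !normrc mulr2n mulrDl mul1r.
  by apply: lerD; rewrite rcle; [exact: habs | rewrite -(pi x); exact: habs].
have gK : forall k x, g (k *: x) = k * g x.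
  move=> k x.
  have -> : k *: x = (complex.Re k)%:C *: x + (complex.Im k)%:C *: ('i *: x).
    by rewrite scalerA -scalerDl mulrC -complexE.
  rewrite gD !gR gi mulrA -mulrDl; congr (_ * _); by rewrite [RHS]complexE [_ * 'i]mulrC.
exists (fun x => g x / g z); split.
- by move=> x y; rewrite gD mulrDl.
- by move=> k x; rewrite gK mulrA.
- exists (2 / `|g z|); split; first by rewrite divr_ge0 // ler0n.
  move=> x; rewrite normrM normfV mulrAC ler_pM2r ?invr_gt0 ?normr_gt0 //.
- by rewrite mulfV.
Qed.
End CHB.

Section Main.
Variables (R : realType) (U : completeNormedModType R[i]) (mul : U -> U -> U).
Hypothesis hB : is_banach_algebra mul.

Definition sumf (phi : U -> U -> R[i]) (s : ftensor U) : R[i] :=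
  \sum_(p <- s) phi p.1 p.2.

Definition bb (phi : U -> U -> R[i]) (K : R[i]) :=
  [/\ bilinear_form phi, 0 <= K & forall u v, `|phi u v| <= K * (`|u| * `|v|)].

Lemma bl_N1 (phi : U -> U -> R[i]) (x y : U) : bilinear_form phi -> phi (- x) y = - phi x y.
Proof.
case=> D1 _ _ _; apply: (addrI (phi x y)); rewrite -D1 !subrr.
by apply: (addrI (phi 0 y)); rewrite -D1 !addr0.
Qed.

Lemma sumf_sub (phi : U -> U -> R[i]) (s t : ftensor U) : bilinear_form phi ->
  sumf phi (ftsub s t) = sumf phi s - sumf phi t.
Proof.
move=> bp; rewrite /sumf /ftsub big_cat big_map /=; congr (_ + _).
by rewrite -sumrN; apply: eq_bigr => q _; rewrite bl_N1.
Qed.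

Lemma sumf_key (phi : U -> U -> R[i]) (K : R[i]) (s : ftensor U) (e : R[i]) : bb phi K -> pnorm_lt s e -> `|sumf phi s| <= K * e.
Proof.
case=> bp K0 Kb [t [eqt lt]]; rewrite /sumf (eqt phi bp).
apply: le_trans (ler_norm_sum _ _ _) _.
apply: le_trans (ler_sum _ (fun q _ => Kb q.1 q.2)) _.
by rewrite -mulr_sumr ler_wpM2l // ltW.
Qed.

Lemma sumfB (phi psi : U -> U -> R[i]) (s : ftensor U) : sumf (fun u v => phi u v - psi u v) s = sumf phi s - sumf psi s.
Proof. by rewrite /sumf sumrB. Qed.


Definition glin (g : U -> R[i]) (G : R[i]) :=
  [/\ (forall x y, g (x + y) = g x + g y), (forall k x, g (k *: x) = k * g x),
      0 <= G & forall x, `|g x| <= G * `|x|].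

Definition psi (g : U -> R[i]) (x u v : U) := g (mul (mul v x) u).
Definition rho (g : U -> R[i]) (z u v : U) := g (mul z (mul u v)).

Lemma bb_psi g G x : glin g G -> bb (psi g x) (G * `|x|).
Proof.
case: hB => mA [mDr mDl] mZl mZr mN [gD gZ G0 gb].
split; last 2 first.
- by rewrite mulr_ge0.
- move=> u v; rewrite /psi; apply: le_trans (gb _) _.
  rewrite -mulrA ler_wpM2l //; apply: le_trans (mN _ _) _.
  by rewrite [`|u| * _]mulrC mulrA [`|x| * _]mulrC ler_wpM2r //; exact: mN.
split=> [u1 u2 v|u v1 v2|k u v|k u v]; rewrite /psi.
- by rewrite mDr gD.
- by rewrite mDl mDl gD.
- by rewrite mZr gZ.
- by rewrite mZl mZl gZ.
Qed.

Lemma bb_rho g G z : glin g G -> bb (rho g z) (G * `|z|).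
Proof.
case: hB => mA [mDr mDl] mZl mZr mN [gD gZ G0 gb].
split; last 2 first.
- by rewrite mulr_ge0.
- move=> u v; rewrite /rho; apply: le_trans (gb _) _.
  rewrite -mulrA ler_wpM2l //; apply: le_trans (mN _ _) _.
  by rewrite ler_wpM2l ?normr_ge0 //; exact: mN.
split=> [u1 u2 v|u v1 v2|k u v|k u v]; rewrite /rho.
- by rewrite mDl mDr gD.
- by rewrite mDr mDr gD.
- by rewrite mZl mZr gZ.
- by rewrite mZr mZr gZ.
Qed.


Lemma mul0r' a : mul 0 a = 0.
Proof. by case: hB => _ [_ mDl] _ _ _; apply: (addrI (mul 0 a)); rewrite -mDl !addr0. Qed.
Lemma mulr0' a : mul a 0 = 0.
Proof. by case: hB => _ [mDr _] _ _ _; apply: (addrI (mul a 0)); rewrite -mDr !addr0. Qed.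
Lemma mulNr' a b : mul (- a) b = - mul a b.
Proof. by case: hB => _ [_ mDl] _ _ _; apply: (addrI (mul a b)); rewrite -mDl !subrr mul0r'. Qed.
Lemma mulrN' a b : mul a (- b) = - mul a b.
Proof. by case: hB => _ [mDr _] _ _ _; apply: (addrI (mul a b)); rewrite -mDr !subrr mulr0'. Qed.
Lemma mulBr' a b c : mul a (b - c) = mul a b - mul a c.
Proof. by case: hB => _ [mDr _] _ _ _; rewrite mDr mulrN'. Qed.
Lemma mulBl' a b c : mul (a - b) c = mul a c - mul b c.
Proof. by case: hB => _ [_ mDl] _ _ _; rewrite mDl mulNr'. Qed.

Lemma g0 g G : glin g G -> g 0 = 0.
Proof. by case=> gD _ _ _; apply: (addrI (g 0)); rewrite -gD !addr0. Qed.
Lemma gB g G x y : glin g G -> g (x - y) = g x - g y.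
Proof.
move=> gl; have := gl; case=> gD _ _ _; rewrite gD; congr (_ + _).
by apply: (addrI (g y)); rewrite -gD !subrr (g0 _ _ gl).
Qed.

Lemma sumf_lmul phi a s : sumf phi (ftlmul mul a s) = \sum_(p <- s) phi (mul a p.1) p.2.
Proof. by rewrite /sumf big_map. Qed.
Lemma sumf_rmul phi a s : sumf phi (ftrmul mul s a) = \sum_(p <- s) phi p.1 (mul p.2 a).
Proof. by rewrite /sumf big_map. Qed.
Lemma sumf_flip phi s : sumf phi (ftflip s) = \sum_(p <- s) phi p.2 p.1.
Proof. by rewrite /sumf big_map. Qed.

Lemma comm_id g G a b s : glin g G ->
  sumf (psi g (mul a b - mul b a)) s =
  - sumf (psi g b) (ftsub (ftlmul mul a s) (ftrmul mul s a)).
Proof.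
move=> gl; have [bp _ _] := bb_psi _ _ b gl.
case: hB => mA _ _ _ _.
rewrite sumf_sub // sumf_lmul sumf_rmul opprB -sumrB /sumf.
apply: eq_bigr => q _; rewrite /psi mulBr' mulBl' (gB _ _ _ _ gl).
by rewrite !mA.
Qed.

Lemma z_id g z s : central mul z ->
  sumf (psi g z) s = sumf (rho g z) (ftflip s).
Proof.
move=> cz; rewrite sumf_flip /sumf; apply: eq_bigr => q _.
case: hB => mA _ _ _ _.
by rewrite /psi /rho mA cz.
Qed.

Lemma rho_id g G z s : glin g G -> sumf (rho g z) s = g (mul z (ftpi mul s)).
Proof.
move=> gl; have := gl; case=> gD _ _ _.
case: hB => _ [mDr _] _ _ _.
rewrite /ftpi /sumf /rho.
rewrite (big_morph (mul z) (mDr z) (mulr0' z)).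
by rewrite (big_morph g gD (g0 _ _ gl)).
Qed.


Lemma posC (r : R) : 0 < r -> 0 < r%:C.
Proof. by move=> r0; rewrite ltcE /= eqxx r0. Qed.

Lemma small (A e : R[i]) : 0 <= A -> 0 < e -> exists r : R, 0 < r /\ A * r%:C < e.
Proof.
move=> A0 e0.
have w0 : 0 < e / (A + 1) by rewrite divr_gt0 // ltr_wpDl.
exists (complex.Re (e / (A + 1))); split.
  by move: w0; rewrite ltcE => /andP[_].
rewrite -(nC _ _ (ltW w0)) mulrA ltr_pdivrMr ?ltr_wpDl // mulrC ltr_pM2l //.
by rewrite ltrDl ltr01.
Qed.

Lemma transfer phi K s1 s2 d : bb phi K -> pnorm_lt (ftsub s1 s2) d ->
  `|sumf phi s1 - sumf phi s2| <= K * d.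
Proof. by move=> bp hp; rewrite -sumf_sub; [exact: sumf_key hp| case: bp]. Qed.

Lemma main_z z : central mul z -> z != 0 -> symmetrically_pseudo_amenable mul ->
  commutator_net_at mul z.
Proof.
move=> cz z0 [L [le [t [[dir tc cond3 cond4] tsym]]]].
have [g [gD gZ [G [G0 gb]] gz]] := @complex_hb R U z z0.
have gl : glin g G by split.
pose P := {r : R | 0 < r}.
have cN : forall lr : L * P, exists N0 : nat, forall m n : nat, (N0 <= m)%N -> (N0 <= n)%N ->
    pnorm_lt (ftsub (t lr.1 m) (t lr.1 n)) (sval lr.2)%:C.
  by move=> [l [r r0]]; apply: tc; exact: posC.
have [Nf hNf] := choice cN.
pose f (lr : L * P) x := sumf (psi g x) (t lr.1 (Nf lr)).
pose le' (p q : L * P) := le p.1 q.1 /\ sval q.2 <= sval p.2.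
case: (dir) => [[l00 _] lrefl ltrans lup].
exists (L * P)%type, le', f; split.
- split.
  + by exists (l00, exist (fun r : R => 0 < r) 1 ltr01).
  + by move=> [l r]; split.
  + move=> [l1 r1] [l2 r2] [l3 r3] [h1 h2] [h3 h4]; split; first exact: ltrans h3.
    exact: le_trans h4 h2.
  + move=> [l1 [r1 p1]] [l2 [r2 p2]]; have [l3 [h1 h2]] := lup l1 l2.
    have p3 : 0 < Num.min r1 r2 by rewrite lt_min p1 p2.
    by exists (l3, exist (fun r : R => 0 < r) _ p3); split; split => //=; rewrite ge_min lexx ?orbT.
- move=> lr; split.
  + move=> x y; rewrite /f /sumf -big_split /=; apply: eq_bigr => q _.
    by case: hB => _ [mDr mDl] _ _ _; rewrite /psi mDr mDl gD.
  + move=> k x; rewrite /f /sumf mulr_sumr; apply: eq_bigr => q _.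
    by case: hB => _ _ mZl mZr _; rewrite /psi mZr mZl gZ.
  + exists (G * \sum_(q <- t lr.1 (Nf lr)) (`|q.1| * `|q.2|)) => x.
    rewrite /f /sumf; apply: le_trans (ler_norm_sum _ _ _) _.
    have [_ _ bd] := bb_psi _ _ x gl.
    apply: le_trans (ler_sum _ (fun q _ => bd q.1 q.2)) _.
    by rewrite -mulr_sumr mulrAC.
- move=> a b e e0.
  set K1 := G * `|mul a b - mul b a|; set Kb := G * `|b|.
  have [r [r0 hr]] := small (K1 + Kb) e (addr_ge0 (mulr_ge0 G0 (normr_ge0 _)) (mulr_ge0 G0 (normr_ge0 _))) e0.
  have [l0 Hl0] := cond3 a (r%:C) (posC _ r0).
  exists (l0, exist (fun r : R => 0 < r) r r0) => -[l [r' p']] [le0 /= rle].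
  have [N0 HN0] := Hl0 l le0.
  pose M := maxn N0 (Nf (l, exist (fun r : R => 0 < r) r' p')).
  rewrite subr0; apply: le_lt_trans hr.
  rewrite /f /= -[X in `|X|](subrK (sumf (psi g (mul a b - mul b a)) (t l M))).
  apply: le_trans (ler_normD _ _) _; rewrite mulrDl; apply: lerD.
    have := transfer _ _ _ _ _ (bb_psi _ _ (mul a b - mul b a) gl)
      (hNf (l, exist (fun r : R => 0 < r) r' p') _ M (leqnn _) (leq_maxr _ _)).
    move/le_trans; apply.
    by rewrite ler_wpM2l ?mulr_ge0 // rcle.
  rewrite (comm_id _ _ _ _ _ gl) normrN.
  by apply: sumf_key (bb_psi _ _ _ gl) (HN0 _ (leq_maxl _ _)).
- move=> e e0.
  set Kz := G * `|z|.
  have Kz0 : 0 <= Kz by rewrite mulr_ge0.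
  have [r [r0 hr]] := small (Kz + Kz + G) e (addr_ge0 (addr_ge0 Kz0 Kz0) G0) e0.
  have [l0 Hl0] := cond4 z (r%:C) (posC _ r0).
  exists (l0, exist (fun r : R => 0 < r) r r0) => -[l [r' p']] [le0 /= rle].
  have [N0p HN0p] := Hl0 l le0.
  have [N0s HN0s] := tsym l (r%:C) (posC _ r0).
  pose N1 := Nf (l, exist (fun r : R => 0 < r) r' p').
  pose M := maxn N1 (maxn N0s N0p).
  apply: le_lt_trans hr.
  rewrite /f /=.
  set QN := sumf (psi g z) _; set QM := sumf (psi g z) (t l M).
  set RM := sumf (rho g z) (t l M).
  have -> : QN - 1 = (QN - QM) + ((QM - RM) + (RM - 1)).
    by rewrite (addrA (QM - RM)) subrK addrA subrK.
  apply: le_trans (ler_normD _ _) _; rewrite !mulrDl -[X in _ <= X]addrA; apply: lerD.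
    have := transfer _ _ _ _ _ (bb_psi _ _ z gl)
      (hNf (l, exist (fun r : R => 0 < r) r' p') _ M (leqnn _) (leq_maxl _ _)).
    move/le_trans; apply.
    by rewrite ler_wpM2l ?mulr_ge0 // rcle.
  apply: le_trans (ler_normD _ _) _; apply: lerD.
    rewrite /QM /RM z_id // -sumf_sub; last by case: (bb_rho _ _ z gl).
    apply: sumf_key (bb_rho _ _ _ gl) _.
    by apply: HN0s; rewrite /M leq_max leq_maxl orbT.
  rewrite /RM (rho_id _ _ _ _ gl) -cz -gz -(gB _ _ _ _ gl).
  apply: le_trans (gb _) _; rewrite ler_wpM2l // ltW //.
  by apply: HN0p; rewrite /M leq_max leq_maxr orbT.
Qed.

End Main.

Theorem proposition3p4 (R : realType) (U : completeNormedModType R[i])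
    (mul : U -> U -> U) :
  is_banach_algebra mul ->
  symmetrically_pseudo_amenable mul ->
  (forall z : U, central mul z -> z != 0 -> commutator_net_at mul z) /\
  (forall e : U, e != 0 -> (forall a, mul e a = a /\ mul a e = a) ->
     commutator_net_at mul e).
Proof.
move=> hB hS; split.
  by move=> z cz z0; exact: main_z.
move=> e e0 he; apply: main_z => // a.
by have [-> ->] := he a.
Qed.
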